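(* Let $1<r<\infty$ and let $X_n=(\mathbb{C}^n,\|\cdot\|)$ and $Y_n=(\mathbb{C}^n,\|\cdot\|)$ be Banach lattices with $M_{(r)}(X_n)=M^{(r)}(Y_n)=1$. Then for any index set $J\subset\mathbb{N}_0^n$, $$\boldsymbol{\chi_{\mathrm{mon}}}\big(\mathcal{P}_J(X_n)\big)\le\boldsymbol{\chi_{\mathrm{mon}}}\big(\mathcal{P}_J(Y_n)\big).$$
   Context: A Banach lattice $X_n=(\mathbb{C}^n,\|\cdot\|)$ is a norm with $\|z\|\le\|w\|$ whenever $|z_k|\le|w_k|$ for all $k$. The $r$-convexity constant $M^{(r)}(Y_n)$ is the least $C$ with $\|(\sum_k|x_k|^r)^{1/r}\|\le C(\sum_k\|x_k\|^r)^{1/r}$ for all finite families in $Y_n$; the $r$-concavity constant $M_{(r)}(X_n)$ is the least $C$ with $(\sum_k\|x_k\|^r)^{1/r}\le C\|(\sum_k|x_k|^r)^{1/r}\|$ (operations coordinatewise). $\mathcal{P}_J(X_n)$: polynomials $\sum_{\alpha\in J}c_\alpha z^\alpha$ with sup norm over the open unit ball. $\boldsymbol{\chi_{\mathrm{mon}}}(\mathcal{P}_J(X_n))$: least $K$ with $\|\sum\varepsilon_\alpha c_\alpha z^\alpha\|\le K\|\sum c_\alpha z^\alpha\|$ for all scalars and all $|\varepsilon_\alpha|=1$. *)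

(* Defs.v *)
From HB Require Import structures.
From mathcomp Require Import all_boot all_order all_algebra.
From mathcomp Require Import all_classical all_reals all_analysis.
From mathcomp Require Import complex.

Set Implicit Arguments.
Unset Strict Implicit.
Unset Printing Implicit Defensive.

Import Order.TTheory GRing.Theory Num.Theory.
Local Open Scope classical_set_scope.
Local Open Scope ring_scope.

Section Defs.
Variable R : realType.

Definition cabs (z : R[i]) : R := Num.sqrt (complex.Re z ^+ 2 + complex.Im z ^+ 2).

Definition cvec (n : nat) := 'I_n -> R[i].

Definition mindex (n : nat) := {ffun 'I_n -> nat}.

(* N is a norm on C^n which is a (complex) Banach lattice norm:
   |z_k| <= |w_k| for all k implies N z <= N w.
   (Completeness is automatic in finite dimension.) *)
Definition lattice_norm (n : nat) (N : cvec n -> R) : Prop :=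
  [/\ (forall z, N z = 0 -> z = (fun _ => 0)),
      (forall (a : R[i]) z, N (fun k => a * z k) = cabs a * N z),
      (forall z w, N (fun k => z k + w k) <= N z + N w) &
      (forall z w, (forall k, cabs (z k) <= cabs (w k)) -> N z <= N w)].

Definition rsum (r : R) (m : nat) (f : 'I_m -> R) : R :=
  (\sum_(j < m) f j `^ r) `^ r^-1.

Definition rvec (r : R) (n m : nat) (x : 'I_m -> cvec n) : cvec n :=
  fun k => Complex (rsum r (fun j => cabs (x j k))) 0.

Definition r_convexity (r : R) (n : nat) (N : cvec n -> R) : \bar R :=
  ereal_inf [set C%:E | C in [set C : R | 0 <= C /\
     forall (m : nat) (x : 'I_m -> cvec n),
       N (rvec r x) <= C * rsum r (fun j => N (x j))]].

Definition r_concavity (r : R) (n : nat) (N : cvec n -> R) : \bar R :=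
  ereal_inf [set C%:E | C in [set C : R | 0 <= C /\
     forall (m : nat) (x : 'I_m -> cvec n),
       rsum r (fun j => N (x j)) <= C * N (rvec r x)]].

Definition monom (n : nat) (a : mindex n) (z : cvec n) : R[i] :=
  \prod_(k < n) z k ^+ a k.

Definition peval (n : nat) (s : seq (mindex n)) (c : mindex n -> R[i])
    (z : cvec n) : R[i] :=
  \sum_(a <- s) c a * monom a z.

Definition sup_norm (n : nat) (N : cvec n -> R) (s : seq (mindex n))
    (c : mindex n -> R[i]) : \bar R :=
  ereal_sup [set (cabs (peval s c z))%:E | z in [set z : cvec n | N z < 1]].

Definition mon_unc_const (n : nat) (N : cvec n -> R) (J : set (mindex n))
    (K : R) : Prop :=
  forall (s : seq (mindex n)) (c eps : mindex n -> R[i]),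
    uniq s -> (forall a, a \in s -> J a) ->
    (forall a, cabs (eps a) = 1) ->
    (sup_norm N s (fun a => (eps a * c a)%R) <= K%:E * sup_norm N s c)%E.

Definition chi_mon (n : nat) (N : cvec n -> R) (J : set (mindex n)) : \bar R :=
  ereal_inf [set K%:E | K in [set K : R | 0 <= K /\ mon_unc_const N J K]].

End Defs.

(* Main.v *)
Require Import Defs.
From HB Require Import structures.
From mathcomp Require Import all_boot all_order all_algebra.
From mathcomp Require Import all_classical all_reals all_analysis.
From mathcomp Require Import complex.
From mathcomp Require Import ring lra.

Set Implicit Arguments.
Unset Strict Implicit.
Unset Printing Implicit Defensive.
Import Order.TTheory GRing.Theory Num.Theory.
Local Open Scope classical_set_scope.
Local Open Scope ring_scope.



Section HB.
Variable R : realType.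

Definition Inf {T : Type} (P : T -> Prop) (f : T -> R) : R := inf [set f t | t in P].

Lemma Inf_lb {T : Type} (P : T -> Prop) (f : T -> R) m t :
  (forall s, P s -> m <= f s) -> P t -> Inf P f <= f t.
Proof.
move=> hm Pt; apply: ge_inf; last by exists t.
by exists m => _ [s Ps <-]; exact: hm.
Qed.

Lemma Inf_glb {T : Type} (P : T -> Prop) (f : T -> R) y :
  (exists t, P t) -> (forall s, P s -> y <= f s) -> y <= Inf P f.
Proof.
move=> [t Pt] hy; apply: lb_le_inf; first by exists (f t), t.
by move=> _ [s Ps <-]; exact: hy.
Qed.

Lemma Inf_add2 {T T' : Type} (P : T -> Prop) (P' : T' -> Prop) A B y :
  (exists s, P s) -> (exists t, P' t) ->
  (forall s t, P s -> P' t -> y <= A s + B t) -> y <= Inf P A + Inf P' B.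
Proof.
move=> hP hP' h.
suff : y - Inf P' B <= Inf P A by lra.
apply: Inf_glb => // s Ps.
suff : y - A s <= Inf P' B by lra.
apply: Inf_glb => // t P't; have := h s t Ps P't; lra.
Qed.

Variable n : nat.
Notation V := ('I_n -> R).

Definition dot (g x : V) : R := \sum_k g k * x k.

Definition sublinear (p : V -> R) :=
  (forall x y : V, p (fun k => x k + y k) <= p x + p y) /\
  (forall (l : R) (x : V), 0 <= l -> p (fun k => l * x k) = l * p x).

Lemma sub0 p : sublinear p -> p (fun _ => 0) = 0.
Proof.
move=> [_ hh]; have h := hh 0 (fun _ => 0) (lexx 0).
transitivity (p (fun k => 0 * (0:R))); first by congr p; apply: funext => k; rewrite mul0r.
by rewrite h mul0r.
Qed.

Lemma sub_lbN p x t : sublinear p -> p (fun k => t * x k) - p (fun k => - x k) <= t * p x ->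
  True.
Proof. by []. Qed.

Section Slice.
Variables (p : V -> R) (v : V) (D : set R).
Hypothesis hp : sublinear p.
Hypothesis D0 : D 0.
Hypothesis DD : forall s t, D s -> D t -> D (s + t).
Hypothesis DM : forall l t, 0 < l -> D t -> D (l * t).
Hypothesis Dlb : forall t, D t -> t * p v <= p (fun k => t * v k).

Definition slice (x : V) := Inf D (fun t => p (fun k => x k + t * v k) - t * p v).

Lemma slice_lbnd x t : D t -> - p (fun k => - x k) <= p (fun k => x k + t * v k) - t * p v.
Proof.
move=> Dt; have h1 := Dlb Dt.
have h2 : p (fun k => t * v k) <= p (fun k => x k + t * v k) + p (fun k => - x k).
  have <- : (fun k => (x k + t * v k) + - x k) = (fun k => t * v k).
    by apply: funext => k; ring.
  exact: hp.1.
lra.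
Qed.

Lemma slice_le x t : D t -> slice x <= p (fun k => x k + t * v k) - t * p v.
Proof. by move=> Dt; apply: (Inf_lb (m := - p (fun k => - x k))) => // s; exact: slice_lbnd. Qed.

Lemma slice_lep x : slice x <= p x.
Proof.
have := slice_le x D0; rewrite mul0r subr0.
by have -> : (fun k => x k + 0 * v k) = x by apply: funext => k; rewrite mul0r addr0.
Qed.

Lemma slice_sublinear : sublinear slice.
Proof.
split.
- move=> x y; apply: Inf_add2; [by exists 0|by exists 0|] => s t Ds Dt.
  apply: le_trans (slice_le (fun k => x k + y k) (DD Ds Dt)) _.
  have := hp.1 (fun k => x k + s * v k) (fun k => y k + t * v k).
  have -> : (fun k => (x k + s * v k) + (y k + t * v k)) =
            (fun k => x k + y k + (s + t) * v k) by apply: funext => k; ring.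
  lra.
- move=> l x; rewrite le_eqVlt => /predU1P[<-|l0].
    rewrite mul0r; apply/eqP; rewrite eq_le; apply/andP; split.
      have := slice_le (fun k => 0 * x k) D0.
      rewrite mul0r subr0.
      have -> : (fun k => 0 * x k + 0 * v k) = (fun _ => 0) by apply: funext => k; ring.
      by rewrite sub0.
    apply: Inf_glb; first by exists 0.
    move=> t Dt; have := slice_lbnd (fun k => 0 * x k) Dt.
    have -> : (fun k => - (0 * x k)) = (fun _ => 0) by apply: funext => k; ring.
    by rewrite sub0 // oppr0.
  apply/eqP; rewrite eq_le; apply/andP; split.
    rewrite -ler_pdivrMl //; apply: Inf_glb; first by exists 0.
    move=> t Dt; rewrite ler_pdivrMl //.
    apply: le_trans (slice_le _ (DM l0 Dt)) _.
    have -> : (fun k => l * x k + l * t * v k) = (fun k => l * (x k + t * v k)).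
      by apply: funext => k; ring.
    rewrite hp.2; last exact: ltW l0.
    by rewrite le_eqVlt; apply/orP; left; apply/eqP; ring.
  apply: Inf_glb; first by exists 0.
  move=> t Dt; have Dt' : D (l^-1 * t) by apply: DM; rewrite ?invr_gt0.
  have := slice_le x Dt'.
  rewrite -(ler_pM2l l0) => /le_trans; apply.
  have -> : (fun k => l * x k + t * v k) = (fun k => l * (x k + l^-1 * t * v k)).
    by apply: funext => k; field; rewrite gt_eqF //.
  rewrite hp.2; last exact: ltW l0.
  rewrite le_eqVlt; apply/orP; left; apply/eqP; field; rewrite gt_eqF //.
Qed.

End Slice.

Definition ev (j : 'I_n) : V := fun k => (k == j)%:R.

Lemma HB_basic (s : seq 'I_n) : forall p, sublinear p ->
  exists g : V, forall x : V, (forall k, k \notin s -> x k = 0) -> dot g x <= p x.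
Proof.
elim: s => [|j s IH] p hp.
  exists (fun _ => 0) => x hx.
  have -> : x = (fun _ => 0) by apply: funext => k; exact: hx.
  by rewrite (sub0 hp) /dot big1 // => k _; rewrite mul0r.
have Dlb : forall t, setT t -> t * p (ev j) <= p (fun k => t * ev j k).
  move=> t _; case: (leP 0 t) => t0; first by rewrite hp.2.
  have -> : (fun k => t * ev j k) = (fun k => (- t) * (- ev j k)).
    by apply: funext => k; ring.
  rewrite hp.2; last by rewrite oppr_ge0 ltW.
  have h0 := hp.1 (ev j) (fun k => - ev j k).
  rewrite (_ : (fun k => ev j k + - ev j k) = (fun _ => 0)) in h0; last first.
    by apply: funext => k; ring.
  rewrite (sub0 hp) in h0; nra.
have hq := slice_sublinear hp (D := setT) I (fun _ _ _ _ => I) (fun _ _ _ _ => I) Dlb.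
have [g' hg'] := IH _ hq.
exists (fun k => if k == j then p (ev j) else g' k) => x hx.
pose x' := fun k => if k == j then 0 else x k.
have hx' : forall k, k \notin s -> x' k = 0.
  move=> k ks; rewrite /x'; case: ifP => // /negbT kj; apply: hx.
  by rewrite in_cons negb_or kj.
have := hg' x' hx'.
have := @slice_le p (ev j) setT hp Dlb x' (x j) I.
have -> : (fun k => x' k + x j * ev j k) = x.
  apply: funext => k; rewrite /x' /ev; case: eqP => [->|]; first by rewrite add0r mulr1.
  by rewrite mulr0 addr0.
have -> : dot (fun k => if k == j then p (ev j) else g' k) x = dot g' x' + x j * p (ev j).
  rewrite /dot (bigD1 j) //= (bigD1 j (P := xpredT)) //= eqxx /x' eqxx mulr0 add0r addrC mulrC.
  congr (_ + _); apply: eq_bigr => k /negbTE kj; by rewrite kj.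
lra.
Qed.

Lemma HB_at p (a : V) : sublinear p ->
  exists g : V, (forall x, dot g x <= p x) /\ dot g a = p a.
Proof.
move=> hp.
have Dlb : forall t, (fun t => 0 <= t) t -> t * p a <= p (fun k => t * a k).
  by move=> t t0; rewrite hp.2.
have hq := slice_sublinear hp (D := fun t => 0 <= t) (lexx 0)
  (fun s t s0 t0 => addr_ge0 s0 t0) (fun l t l0 t0 => mulr_ge0 (ltW l0) t0) Dlb.
have [g hg] := HB_basic (enum 'I_n) hq.
have hg2 : forall x, dot g x <= slice p a (fun t => 0 <= t) x.
  by move=> x; apply: hg => k; rewrite mem_enum.
exists g; split=> [x|].
  exact: le_trans (hg2 x) (slice_lep hp (lexx 0) Dlb x).
apply/eqP; rewrite eq_le; apply/andP; split.
  exact: le_trans (hg2 a) (slice_lep hp (lexx 0) Dlb a).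
have := le_trans (hg2 (fun k => - a k)) (slice_le hp Dlb (fun k => - a k) ler01).
have -> : (fun k => - a k + 1 * a k) = (fun _ => 0) by apply: funext => k; ring.
rewrite sub0 // mul1r add0r.
have -> : dot g (fun k => - a k) = - dot g a.
  by rewrite /dot -sumrN; apply: eq_bigr => k _; ring.
lra.
Qed.

End HB.



Section Super.
Variable R : realType.
Variable n : nat.
Notation V := ('I_n -> R).
Definition nonneg (b : V) := forall k, 0 <= b k.

Variable phi : V -> R.
Hypothesis phom : forall l b, 0 <= l -> nonneg b -> phi (fun k => l * b k) = l * phi b.
Hypothesis psup : forall b b', nonneg b -> nonneg b' -> phi b + phi b' <= phi (fun k => b k + b' k).
Hypothesis pmono : forall b b', nonneg b -> (forall k, b k <= b' k) -> phi b <= phi b'.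
Hypothesis pge0 : forall b, nonneg b -> 0 <= phi b.

Lemma phi0 : phi (fun _ => 0) = 0.
Proof.
have h := phom (l := 0) (b := fun _ => 0) (lexx 0) (fun _ => lexx 0).
transitivity (phi (fun k => 0 * (0:R))); first by congr phi; apply: funext => k; rewrite mul0r.
by rewrite h mul0r.
Qed.

Lemma sum_ge0 (b : V) : nonneg b -> 0 <= \sum_k b k.
Proof. by move=> hb; apply: sumr_ge0 => k _; exact: hb. Qed.

Lemma le_sum1 (b : V) k : nonneg b -> b k <= \sum_j b j.
Proof.
move=> hb; rewrite (bigD1 k) //= lerDl; apply: sumr_ge0 => j _; exact: hb.
Qed.

Definition C1 := phi (fun _ => 1).

Lemma C1_ge0 : 0 <= C1.
Proof. by apply: pge0 => k. Qed.

Lemma phi_lin b : nonneg b -> phi b <= C1 * \sum_k b k.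
Proof.
move=> hb; have h := pmono (b' := fun k => (\sum_j b j) * 1) hb.
rewrite phom ?sum_ge0 // in h; first by rewrite mulrC; apply: h => k; rewrite mulr1 le_sum1.
Qed.

Variables (a : V) (m : R).
Hypothesis m0 : 0 < m.
Hypothesis am : forall k, m <= a k.

Lemma a_nonneg : nonneg a.
Proof. by move=> k; apply: le_trans (ltW m0) (am k). Qed.

Lemma phi_lip b : nonneg b -> phi b <= phi a + phi a / m * \sum_k `|b k - a k|.
Proof.
move=> hb; set s := \sum_k _.
have s0 : 0 <= s by apply: sumr_ge0 => k _.
have hpa := pge0 a_nonneg.
case: (eqVneq s 0) => [s00|sn0].
  have eba : b = a.
    apply: funext => k; apply/eqP; rewrite -subr_eq0 -normr_eq0; apply/eqP.
    move/eqP: s00; rewrite psumr_eq0 //; first by move/allP => /(_ k (mem_index_enum _)) /eqP.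
  by rewrite s00 mulr0 addr0 eba.
have sp : 0 < s by rewrite lt_neqAle eq_sym sn0.
pose y := fun k => a k - m / s * (b k - a k).
have hy : nonneg y.
  move=> k; rewrite /y subr_ge0.
  have h1 : `|b k - a k| <= s.
    by apply: (le_sum1 (b := fun k => `|b k - a k|)) => j.
  have h2 : b k - a k <= `|b k - a k| by apply: ler_norm.
  have h3 : m / s * (b k - a k) <= m / s * s.
    by apply: ler_wpM2l; [rewrite divr_ge0 // ltW | apply: le_trans h2 h1].
  rewrite mulfVK ?sn0 // in h3; exact: le_trans h3 (am k).
have ea : a = (fun k => s / (s + m) * y k + m / (s + m) * b k).
  apply: funext => k; rewrite /y; field.
  by rewrite sn0 andbT gt_eqF // addr_gt0.
have hsm : 0 < s + m by rewrite addr_gt0.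
have key : m / (s + m) * phi b <= phi a.
  have := psup (b := fun k => s / (s + m) * y k) (b' := fun k => m / (s + m) * b k).
  rewrite -ea phom ?phom //; last 2 first.
  - by rewrite divr_ge0 // ltW.
  - by rewrite divr_ge0 // ltW.
  have := pge0 hy.
  have : 0 <= s / (s + m) by rewrite divr_ge0 // ltW.
  move=> h1 h2 h3.
  have := h3 (fun k => mulr_ge0 h1 (hy k)) (fun k => mulr_ge0 (divr_ge0 (ltW m0) (ltW hsm)) (hb k)).
  have : 0 <= s / (s + m) * phi y by apply: mulr_ge0.
  lra.
have : phi b <= phi a * (s + m) / m.
  rewrite ler_pdivlMr // -(ler_pM2l (x := (s+m)^-1)) ?invr_gt0 //.
  have -> : (s + m)^-1 * (phi b * m) = m / (s + m) * phi b by ring.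
  have -> : (s + m)^-1 * (phi a * (s + m)) = phi a by field; rewrite gt_eqF.
  exact: key.
move=> h; apply: le_trans h _; rewrite le_eqVlt; apply/orP; left; apply/eqP; field.
by rewrite gt_eqF.
Qed.

Definition Mc := C1 + phi a / m.

Lemma pam_ge0 : 0 <= phi a / m.
Proof. by apply: divr_ge0; [exact: pge0 a_nonneg | exact: ltW m0]. Qed.

Lemma Mc_ge0 : 0 <= Mc.
Proof. by rewrite addr_ge0 ?C1_ge0 ?pam_ge0. Qed.

Definition pf (x : V) := Inf nonneg (fun b => Mc * \sum_k `|x k - b k| - phi b).

Lemma pf_lbnd x b : nonneg b -> - (Mc * \sum_k `|x k|) <= Mc * \sum_k `|x k - b k| - phi b.
Proof.
move=> hb; have h1 := phi_lin hb.
have h2 : C1 * \sum_k b k <= Mc * \sum_k b k.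
  apply: ler_wpM2r; first exact: sum_ge0.
  by rewrite /Mc lerDl pam_ge0.
have h3 : \sum_k b k <= \sum_k `|x k - b k| + \sum_k `|x k|.
  rewrite -big_split /=; apply: ler_sum => k _.
  have := ler_normD (b k - x k) (x k).
  by rewrite subrK distrC ger0_norm.
have h4 : Mc * \sum_k b k <= Mc * (\sum_k `|x k - b k| + \sum_k `|x k|).
  by apply: ler_wpM2l; [exact: Mc_ge0|].
lra.
Qed.

Lemma pf_le x b : nonneg b -> pf x <= Mc * \sum_k `|x k - b k| - phi b.
Proof. by move=> hb; apply: (Inf_lb (m := - (Mc * \sum_k `|x k|))) => // c; exact: pf_lbnd. Qed.

Lemma nonneg0 : nonneg (fun _ => 0). Proof. by move=> k. Qed.

Lemma pf_sublinear : sublinear pf.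
Proof.
split.
- move=> x y; apply: Inf_add2; [by exists (fun _ => 0); exact: nonneg0|
    by exists (fun _ => 0); exact: nonneg0|] => b1 b2 hb1 hb2.
  have hb12 : nonneg (fun k => b1 k + b2 k) by move=> k; rewrite addr_ge0.
  apply: le_trans (pf_le _ hb12) _.
  have := psup hb1 hb2.
  have : \sum_k `|x k + y k - (b1 k + b2 k)| <= \sum_k `|x k - b1 k| + \sum_k `|y k - b2 k|.
    rewrite -big_split /=; apply: ler_sum => k _.
    have -> : x k + y k - (b1 k + b2 k) = (x k - b1 k) + (y k - b2 k) by ring.
    exact: ler_normD.
  move=> h; have := ler_wpM2l Mc_ge0 h; lra.
- move=> l x; rewrite le_eqVlt => /predU1P[<-|l0].
    rewrite mul0r; apply/eqP; rewrite eq_le; apply/andP; split.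
      apply: le_trans (pf_le _ nonneg0) _.
      rewrite phi0 big1 ?mulr0 ?subr0 // => k _; by rewrite mul0r subr0 normr0.
    apply: Inf_glb; first by exists (fun _ => 0); exact: nonneg0.
    move=> b hb; have := phi_lin hb.
    have -> : \sum_k `|0 * x k - b k| = \sum_k b k.
      by apply: eq_bigr => k _; rewrite mul0r sub0r normrN ger0_norm.
    have : C1 <= Mc by rewrite /Mc lerDl pam_ge0.
    move=> h1 h2; have := ler_wpM2r (sum_ge0 hb) h1; lra.
  have hsc : forall (c : R) (x b : V), 0 < c -> \sum_k `|c * x k - c * b k| = c * \sum_k `|x k - b k|.
    move=> c x' b c0; rewrite mulr_sumr; apply: eq_bigr => k _.
    by rewrite -mulrBr normrM gtr0_norm.
  apply/eqP; rewrite eq_le; apply/andP; split.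
    rewrite -ler_pdivrMl //; apply: Inf_glb; first by exists (fun _ => 0); exact: nonneg0.
    move=> b hb; rewrite ler_pdivrMl //.
    have hlb : nonneg (fun k => l * b k) by move=> k; rewrite mulr_ge0 // ltW.
    apply: le_trans (pf_le _ hlb) _.
    rewrite hsc // phom //; last exact: ltW.
    rewrite le_eqVlt; apply/orP; left; apply/eqP; ring.
  apply: Inf_glb; first by exists (fun _ => 0); exact: nonneg0.
  move=> b hb.
  have hlb : nonneg (fun k => l^-1 * b k) by move=> k; rewrite mulr_ge0 // invr_ge0 ltW.
  have := pf_le x hlb; rewrite -(ler_pM2l l0) => /le_trans; apply.
  have e1 : \sum_k `|l * x k - b k| = l * \sum_k `|x k - l^-1 * b k|.
    by rewrite -hsc //; apply: eq_bigr => k _; rewrite mulrA mulfV ?gt_eqF // mul1r.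
  have e2 : phi b = l * phi (fun k => l^-1 * b k).
    rewrite -phom //; last exact: ltW.
    by congr phi; apply: funext => k; rewrite mulrA mulfV ?gt_eqF // mul1r.
  rewrite e1 e2 le_eqVlt; apply/orP; left; apply/eqP; ring.
Qed.

Lemma supergrad : exists G : V, (forall b, nonneg b -> phi b <= dot G b) /\ dot G a = phi a.
Proof.
have [g [hg hga]] := HB_at a pf_sublinear.
have hpfa : pf a = - phi a.
  apply/eqP; rewrite eq_le; apply/andP; split.
    have := pf_le a a_nonneg.
    by rewrite big1 ?mulr0 ?sub0r // => k _; rewrite subrr normr0.
  apply: Inf_glb; first by exists (fun _ => 0); exact: nonneg0.
  move=> b hb; have := phi_lip hb.
  have -> : \sum_k `|b k - a k| = \sum_k `|a k - b k| by apply: eq_bigr => k _; rewrite distrC.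
  have h1 : 0 <= C1 * \sum_k `|a k - b k| by rewrite mulr_ge0 ?C1_ge0 // sumr_ge0.
  rewrite /Mc mulrDl; lra.
have hdN : forall x, dot (fun k => - g k) x = - dot g x.
  by move=> x; rewrite /dot -sumrN; apply: eq_bigr => k _; rewrite mulNr.
exists (fun k => - g k); split.
  move=> b hb; rewrite hdN; have := hg b; have := pf_le b hb.
  rewrite big1 => [|k _]; last by rewrite subrr normr0.
  by rewrite mulr0 sub0r => h1 h2; lra.
by rewrite hdN hga hpfa opprK.
Qed.

End Super.



Section Loz.
Variable R : realType.

Lemma ln1D_lb (z : R) : -1/2 <= z -> z - 2 * z ^+ 2 <= ln (1 + z).
Proof.
move=> hz.
have hz1 : 0 < 1 + z by lra.
have h1 : ln ((1 + z)^-1) <= (1 + z)^-1 - 1.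
  have := @le_ln1Dx R ((1 + z)^-1 - 1).
  rewrite (addrC 1 ((1 + z)^-1 - 1)) subrK; apply.
  have : 0 < (1 + z)^-1 by rewrite invr_gt0.
  lra.
rewrite lnV ?posrE // in h1.
have h2 : z - 2 * z ^+ 2 <= (1 + z)^-1 * z.
  rewrite -subr_ge0.
  have -> : (1 + z)^-1 * z - (z - 2 * z ^+ 2) = (1 + z)^-1 * (z ^+ 2 * (1 + 2 * z)).
    by field; rewrite gt_eqF //.
  apply: mulr_ge0; first by rewrite invr_ge0 ltW.
  by apply: mulr_ge0; [exact: sqr_ge0|lra].
have e : (1 + z)^-1 * z = 1 - (1 + z)^-1 by field; rewrite gt_eqF //.
rewrite e in h2.
lra.
Qed.

Variable n : nat.
Notation V := ('I_n -> R).

Variable psi : V -> R.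
Hypothesis qhom : forall l b, 0 <= l -> nonneg b -> psi (fun k => l * b k) = l * psi b.
Hypothesis qsub : forall b b', nonneg b -> nonneg b' -> psi (fun k => b k + b' k) <= psi b + psi b'.
Variable Bd : V.
Hypothesis Bpos : forall k, 0 < Bd k.
Hypothesis Bbound : forall t, nonneg t -> psi t <= 1 -> forall k, t k <= Bd k.
Variable c0 : V.
Hypothesis c0pos : forall k, 0 < c0 k.
Hypothesis c0in : psi c0 <= 1.
Variable beta : V.
Hypothesis betapos : forall k, 0 < beta k.

Definition Dom (c : V) := (forall k, 0 < c k) /\ psi c <= 1.
Definition Fl (c : V) := \sum_k beta k * ln (c k).
Definition Ub := \sum_k beta k * ln (Bd k).

Lemma Fl_ub c : Dom c -> Fl c <= Ub.
Proof.
move=> [cp cin]; apply: ler_sum => k _; apply: ler_wpM2l; first exact: ltW.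
rewrite ler_ln ?posrE //; apply: Bbound => // j; exact: ltW.
Qed.

Definition Sset := [set Fl c | c in Dom].
Definition Ssup := sup Sset.

Lemma Sset_sup : has_sup Sset.
Proof. by split; [exists (Fl c0), c0 | exists Ub => _ [c hc <-]; exact: Fl_ub]. Qed.

Lemma Fl_le_sup c : Dom c -> Fl c <= Ssup.
Proof. by move=> hc; apply: sup_upper_bound; [exact: Sset_sup | exists c]. Qed.

Definition Wc := Ub - Fl c0 + 1.
Definition Lk k := expR (Wc / beta k).
Definition Qc := \sum_k beta k * (1 + Lk k) ^+ 2.

Lemma Qc_ge0 : 0 <= Qc.
Proof. by apply: sumr_ge0 => k _; rewrite mulr_ge0 ?sqr_ge0 // ltW. Qed.

Lemma ratio_bound c : Dom c -> Ssup - 1 < Fl c -> forall k, Bd k / c k < Lk k.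
Proof.
move=> hc hF k.
have hc0 := Fl_le_sup (conj c0pos c0in).
have h1 : Fl c - Ub <= beta k * (ln (c k) - ln (Bd k)).
  rewrite /Fl /Ub -sumrB (bigD1 k) //= -mulrBr gerDl.
  apply: sumr_le0 => j _; rewrite -mulrBr; apply: mulr_ge0_le0; first exact: ltW.
  rewrite subr_le0 ler_ln ?posrE //; last exact: hc.1.
  by apply: Bbound; [move=> i; exact: ltW (hc.1 i)|exact: hc.2].
have h2 : ln (Bd k / c k) < Wc / beta k.
  rewrite ln_div ?posrE //; last exact: hc.1.
  rewrite ltr_pdivlMr // /Wc; nra.
by rewrite -(lnK (x := Bd k / c k)) ?posrE ?divr_gt0 // ?ltr_expR //; exact: hc.1.
Qed.

Lemma lozan eta : 0 < eta -> exists c, Dom c /\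
  forall t, nonneg t -> psi t <= 1 -> \sum_k beta k * t k / c k <= \sum_k beta k + eta.
Proof.
move=> eta0.
pose lam := eta / (4 * Qc + 2 * eta).
have hden : 0 < 4 * Qc + 2 * eta by have := Qc_ge0; lra.
have lam0 : 0 < lam by rewrite divr_gt0.
have elam : lam * (4 * Qc + 2 * eta) = eta by rewrite /lam; field; rewrite gt_eqF //.
have hQ := Qc_ge0.
clearbody lam.
have lam12 : lam <= 1/2 by nra.
have lamQ : 2 * lam * Qc <= eta / 2 by nra.
pose eps := lam * eta / (2 + lam * eta).
have le0 : 0 < lam * eta by rewrite mulr_gt0.
have eps0 : 0 < eps by rewrite divr_gt0 //; lra.
have eps1 : eps <= 1 by rewrite ler_pdivrMr; lra.
have epsl : eps / lam <= eta / 2.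
  rewrite /eps (_ : lam * eta / (2 + lam * eta) / lam = eta / (2 + lam * eta)); last first.
    by field; rewrite !gt_eqF //; lra.
  rewrite ler_pdivrMr; [nra|lra].
have [_ [c hc <-] hFc] := sup_adherent eps0 Sset_sup.
have hFc2 : Ssup - eps < Fl c by exact: hFc.
have hF1 : Ssup - 1 < Fl c by lra.
have hrat := ratio_bound hc hF1.
exists c; split => // t ht tin.
pose y := fun k => t k / c k - 1.
have hcp := hc.1.
have hy1 : forall k, -1 <= y k.
  by move=> k; rewrite /y lerBrDr addNr divr_ge0 // ltW.
have hyL : forall k, y k ^+ 2 <= (1 + Lk k) ^+ 2.
  move=> k; have hLk : 0 < Lk k by exact: expR_gt0.
  have : t k / c k <= Bd k / c k.
    by rewrite ler_pM2r ?invr_gt0 //; exact: Bbound.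
  have := hrat k; have := hy1 k; rewrite /y => h1 h2 h3; nra.
pose cl := fun k => (1 - lam) * c k + lam * t k.
have hcl : Dom cl.
  split.
    move=> k; rewrite /cl; have := hcp k; have := ht k.
    move=> h1 h2; have : 0 < (1 - lam) * c k by rewrite mulr_gt0 //; lra.
    have : 0 <= lam * t k by rewrite mulr_ge0 // ltW.
    lra.
  have hn1 : nonneg (fun k => (1 - lam) * c k).
    by move=> k; apply: mulr_ge0; [lra|exact: ltW].
  have hn2 : nonneg (fun k => lam * t k).
    by move=> k; apply: mulr_ge0; [exact: ltW|exact: ht].
  apply: le_trans (qsub hn1 hn2) _.
  rewrite (qhom (l := 1 - lam)); [|lra|by move=> k; exact: ltW].
  rewrite (qhom (l := lam)); [|exact: ltW|exact: ht].
  have := hc.2; nra.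
have hFcl := Fl_le_sup hcl.
have ediff : Fl cl - Fl c = \sum_k beta k * ln (1 + lam * y k).
  rewrite /Fl -sumrB; apply: eq_bigr => k _.
  have -> : cl k = c k * (1 + lam * y k).
    by rewrite /cl /y; field; rewrite gt_eqF //.
  have hp : 0 < 1 + lam * y k.
    have := hy1 k; have : lam * y k >= - lam.
      by rewrite -mulrN1 ler_pM2l.
    lra.
  by rewrite lnM ?posrE //; ring.
have hlow : \sum_k beta k * (lam * y k - 2 * (lam * y k) ^+ 2) <= Fl cl - Fl c.
  rewrite ediff; apply: ler_sum => k _; apply: ler_wpM2l; first exact: ltW.
  apply: ln1D_lb.
  have := hy1 k; have : lam * y k >= - lam by rewrite -mulrN1 ler_pM2l.
  lra.
have hsq : \sum_k beta k * (lam * y k - 2 * (lam * y k) ^+ 2) >=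
     lam * \sum_k beta k * y k - 2 * lam ^+ 2 * Qc.
  rewrite /Qc mulr_sumr mulr_sumr -sumrB; apply: ler_sum => k _.
  have := hyL k; have := betapos k.
  have : 0 <= lam ^+ 2 by exact: sqr_ge0.
  move=> h1 h2 h3.
  have : beta k * y k ^+ 2 * lam ^+ 2 <= beta k * (1 + Lk k) ^+ 2 * lam ^+ 2.
    by apply: ler_wpM2r; [exact: h1|apply: ler_wpM2l; [exact: ltW|exact: h3]].
  move=> h4; have e : (lam * y k) ^+ 2 = lam ^+ 2 * y k ^+ 2 by ring.
  rewrite e; nra.
have hsumy : \sum_k beta k * y k <= eta.
  have h1 : lam * \sum_k beta k * y k < eps + 2 * lam ^+ 2 * Qc by lra.
  have h2 : \sum_k beta k * y k < eps / lam + 2 * lam * Qc.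
    rewrite -(ltr_pM2l lam0); apply: lt_le_trans h1 _.
    rewrite le_eqVlt; apply/orP; left; apply/eqP; field; rewrite gt_eqF //.
  lra.
have -> : \sum_k beta k * t k / c k = \sum_k beta k * y k + \sum_k beta k.
  rewrite -big_split /=; apply: eq_bigr => k _; rewrite /y; field; rewrite gt_eqF //.
lra.
Qed.

End Loz.



Section Norms.
Variable R : realType.

Lemma cmulE (a b c d : R) : (Complex a b : R[i]) * Complex c d = Complex (a * c - b * d) (a * d + b * c).
Proof. by []. Qed.

Lemma cabs_ge0 (z : R[i]) : 0 <= cabs z.
Proof. exact: sqrtr_ge0. Qed.

Lemma cabsM (x y : R[i]) : cabs (x * y) = cabs x * cabs y.
Proof.
case: x => a b; case: y => c d; rewrite cmulE /cabs /= -sqrtrM; last first.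
  by rewrite addr_ge0 // sqr_ge0.
by congr Num.sqrt; ring.
Qed.

Lemma cabs_real (x : R) : cabs (Complex x 0) = `|x|.
Proof. by rewrite /cabs /= expr0n /= addr0 sqrtr_sqr. Qed.

Lemma cabs_nn (x : R) : 0 <= x -> cabs (Complex x 0) = x.
Proof. by move=> x0; rewrite cabs_real ger0_norm. Qed.

Variable n : nat.
Notation V := ('I_n -> R).
Definition emb (b : V) : cvec R n := fun k => Complex (b k) 0.

Variable N : cvec R n -> R.
Hypothesis hN : lattice_norm N.

Lemma N0 : N (fun _ => 0) = 0.
Proof.
case: hN => _ hh _ _; have h := hh 0 (fun _ => 0).
rewrite (_ : cabs 0 = 0) ?mul0r in h; last by rewrite (cabs_nn (lexx 0)).
by rewrite -h; congr N; apply: funext => k; rewrite mul0r.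
Qed.

Lemma N_mono z w : (forall k, cabs (z k) <= cabs (w k)) -> N z <= N w.
Proof. by case: hN => _ _ _; apply. Qed.

Lemma N_eq z w : (forall k, cabs (z k) = cabs (w k)) -> N z = N w.
Proof.
move=> h; apply/eqP; rewrite eq_le; apply/andP; split; apply: N_mono => k; by rewrite h.
Qed.

Lemma N_ge0 z : 0 <= N z.
Proof.
rewrite -N0; apply: N_mono => k; rewrite (cabs_nn (lexx 0)); exact: cabs_ge0.
Qed.

Lemma N_add z w : N (fun k => z k + w k) <= N z + N w.
Proof. by case: hN. Qed.

Lemma N_scale (l : R) z : 0 <= l -> N (fun k => Complex l 0 * z k) = l * N z.
Proof. by case: hN => _ hh _ _ l0; rewrite hh cabs_nn. Qed.

Lemma N_pos z k : z k != 0 -> 0 < N z.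
Proof.
move=> zk; rewrite lt_neqAle N_ge0 andbT eq_sym; apply/negP => /eqP h.
case: hN => h0 _ _ _; move: (h0 _ h) => /(congr1 (fun f => f k)) /= /eqP.
by rewrite (negbTE zk).
Qed.

Variable r : R.
Hypothesis r0 : 0 < r.

Lemma powRK1 y : 0 <= y -> (y `^ r^-1) `^ r = y.
Proof. by move=> y0; rewrite -powRrM mulVf ?gt_eqF // powRr1. Qed.

Lemma powRK2 y : 0 <= y -> (y `^ r) `^ r^-1 = y.
Proof. by move=> y0; rewrite -powRrM mulfV ?gt_eqF // powRr1. Qed.

Lemma powR_mono (s x y : R) : 0 <= s -> 0 <= x -> x <= y -> x `^ s <= y `^ s.
Proof.
move=> s0 x0 xy; apply: ge0_ler_powR => //; rewrite nnegrE //; exact: le_trans xy.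
Qed.

Lemma powR_lt1 (s x : R) : 0 < s -> 0 <= x -> x < 1 -> x `^ s < 1.
Proof.
move=> s0 x0 x1; have p1 : (1:R) `^ s = 1 by rewrite powR1.
rewrite -[X in _ < X]p1; apply: gt0_ltr_powR => //; rewrite nnegrE //.
Qed.

Lemma powR_lt1_inv (s x : R) : 0 < s -> 0 <= x -> x `^ s < 1 -> x < 1.
Proof.
move=> s0 x0; case: (ltP x 1) => // x1.
have p1 : (1:R) `^ s = 1 by rewrite powR1.
have := powR_mono (ltW s0) ler01 x1; rewrite p1 => h1 h2.
by have := lt_le_trans h2 h1; rewrite ltxx.
Qed.

Definition Phi (b : V) := N (emb (fun k => b k `^ r^-1)) `^ r.

Lemma Phi_ge0 b : 0 <= Phi b.
Proof. exact: powR_ge0. Qed.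

Lemma Phi_hom l b : 0 <= l -> nonneg b -> Phi (fun k => l * b k) = l * Phi b.
Proof.
move=> l0 hb; rewrite /Phi.
have -> : N (emb (fun k => (l * b k) `^ r^-1)) =
          N (fun k => Complex (l `^ r^-1) 0 * emb (fun k => b k `^ r^-1) k).
  apply: N_eq => k; rewrite cabsM /emb !cabs_nn ?powR_ge0 // powRM //.
rewrite N_scale ?powR_ge0 // powRM ?powR_ge0 ?N_ge0 // powRK1 //.
Qed.

Lemma Phi_mono b b' : nonneg b -> (forall k, b k <= b' k) -> Phi b <= Phi b'.
Proof.
move=> hb hbb; apply: powR_mono; [exact: ltW|exact: N_ge0|].
apply: N_mono => k; rewrite /emb !cabs_nn ?powR_ge0 //.
by apply: powR_mono; [rewrite invr_ge0 ltW|exact: hb|exact: hbb].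
Qed.

Lemma Phi_abs (z : cvec R n) : Phi (fun k => cabs (z k) `^ r) = N z `^ r.
Proof.
rewrite /Phi; congr (_ `^ r); apply: N_eq => k.
by rewrite /emb cabs_nn ?powR_ge0 // powRK2 // cabs_ge0.
Qed.

Lemma Phi_emb (x : V) : nonneg x -> Phi (fun k => x k `^ r) = N (emb x) `^ r.
Proof.
move=> hx; rewrite /Phi; congr (_ `^ r); apply: N_eq => k.
by rewrite /emb powRK2.
Qed.

Lemma Phi_ev k : 0 < Phi (@ev R n k).
Proof.
apply: powR_gt0; apply: (@N_pos _ k).
rewrite /emb /ev eqxx powR1 /=; apply/eqP => /(congr1 (@complex.Re R)) /= /eqP.
by rewrite oner_eq0.
Qed.

End Norms.



Section Fact.
Variables (R : realType) (n : nat) (r : R).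
Hypothesis hr : 1 < r.
Notation V := ('I_n -> R).

Lemma r0 : 0 < r. Proof. exact: lt_trans ltr01 hr. Qed.

Lemma rsum2 (f : 'I_2 -> R) : rsum r f = (f ord0 `^ r + f (lift ord0 ord0) `^ r) `^ r^-1.
Proof. by rewrite /rsum !big_ord_recl big_ord0 addr0. Qed.

Definition pair2 (y1 y2 : cvec R n) : 'I_2 -> cvec R n :=
  fun j => if val j == 0%N then y1 else y2.

Lemma rvec_pair (b1 b2 : V) : nonneg b1 -> nonneg b2 ->
  rvec r (pair2 (emb (fun k => b1 k `^ r^-1)) (emb (fun k => b2 k `^ r^-1))) =
  emb (fun k => (b1 k + b2 k) `^ r^-1).
Proof.
move=> h1 h2; apply: funext => k; rewrite /rvec rsum2 /= /emb.
by rewrite !cabs_nn ?powR_ge0 // !(powRK1 r0).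
Qed.

Lemma rsum_pair (N : cvec R n -> R) (b1 b2 : V) :
  rsum r (fun j => N (pair2 (emb (fun k => b1 k `^ r^-1)) (emb (fun k => b2 k `^ r^-1)) j)) =
  (Phi N r b1 + Phi N r b2) `^ r^-1.
Proof. by rewrite rsum2. Qed.

Lemma Phi_superadd (N : cvec R n -> R) : lattice_norm N ->
  (forall m (x : 'I_m -> cvec R n), rsum r (fun j => N (x j)) <= N (rvec r x)) ->
  forall b1 b2, nonneg b1 -> nonneg b2 ->
  Phi N r b1 + Phi N r b2 <= Phi N r (fun k => b1 k + b2 k).
Proof.
move=> hN hc b1 b2 h1 h2.
have := hc _ (pair2 (emb (fun k => b1 k `^ r^-1)) (emb (fun k => b2 k `^ r^-1))).
rewrite rsum_pair rvec_pair // => h.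
have := powR_mono (ltW r0) (powR_ge0 _ _) h.
rewrite (powRK1 r0) //; apply: addr_ge0; exact: Phi_ge0.
Qed.

Lemma Phi_subadd (N : cvec R n -> R) : lattice_norm N ->
  (forall m (x : 'I_m -> cvec R n), N (rvec r x) <= rsum r (fun j => N (x j))) ->
  forall b1 b2, nonneg b1 -> nonneg b2 ->
  Phi N r (fun k => b1 k + b2 k) <= Phi N r b1 + Phi N r b2.
Proof.
move=> hN hc b1 b2 h1 h2.
have := hc _ (pair2 (emb (fun k => b1 k `^ r^-1)) (emb (fun k => b2 k `^ r^-1))).
rewrite rsum_pair rvec_pair // => h.
have := powR_mono (ltW r0) (N_ge0 hN _) h.
rewrite (powRK1 r0) //; apply: addr_ge0; exact: Phi_ge0.
Qed.

Lemma conc_ineq (N : cvec R n -> R) : lattice_norm N -> r_concavity r N = 1%E ->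
  forall m (x : 'I_m -> cvec R n), rsum r (fun j => N (x j)) <= N (rvec r x).
Proof.
move=> hN h m x; set L := rsum _ _; set Y := N _.
have Y0 : 0 <= Y by exact: N_ge0.
apply/ler_addgt0Pr => e e0.
have hlt : (r_concavity r N < (1 + e / (Y + 1))%:E)%E.
  by rewrite h lte_fin ltrDl divr_gt0 //; lra.
have [_ [C [C0 hC] <-]] := ereal_inf_lt hlt.
rewrite lte_fin => hC1.
have h1 := hC m x.
have h2 : C * Y <= (1 + e / (Y + 1)) * Y by apply: ler_wpM2r => //; exact: ltW.
have h3 : e / (Y + 1) * Y <= e.
  rewrite mulrAC ler_pdivrMr; last lra.
  by rewrite ler_pM2l //; lra.
rewrite -/L -/Y in h1; nra.
Qed.

Lemma conv_ineq (N : cvec R n -> R) : lattice_norm N -> r_convexity r N = 1%E ->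
  forall m (x : 'I_m -> cvec R n), N (rvec r x) <= rsum r (fun j => N (x j)).
Proof.
move=> hN h m x; set L := N _; set Y := rsum _ _.
have Y0 : 0 <= Y by exact: powR_ge0.
apply/ler_addgt0Pr => e e0.
have hlt : (r_convexity r N < (1 + e / (Y + 1))%:E)%E.
  by rewrite h lte_fin ltrDl divr_gt0 //; lra.
have [_ [C [C0 hC] <-]] := ereal_inf_lt hlt.
rewrite lte_fin => hC1.
have h1 := hC m x.
have h2 : C * Y <= (1 + e / (Y + 1)) * Y by apply: ler_wpM2r => //; exact: ltW.
have h3 : e / (Y + 1) * Y <= e.
  rewrite mulrAC ler_pdivrMr; last lra.
  by rewrite ler_pM2l //; lra.
rewrite -/L -/Y in h1; nra.
Qed.

End Fact.



Section Factor.
Variables (R : realType) (n : nat) (r : R).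
Hypothesis hr : 1 < r.
Notation V := ('I_n -> R).
Variables (NX NY : cvec R n -> R).
Hypothesis hX : lattice_norm NX.
Hypothesis hY : lattice_norm NY.
Hypothesis hXc : forall m (x : 'I_m -> cvec R n), rsum r (fun j => NX (x j)) <= NX (rvec r x).
Hypothesis hYc : forall m (x : 'I_m -> cvec R n), NY (rvec r x) <= rsum r (fun j => NY (x j)).

Lemma caddE (a b c d : R) : (Complex a b : R[i]) + Complex c d = Complex (a + c) (b + d).
Proof. by []. Qed.

Lemma dot_ev (G : V) k : dot G (@ev R n k) = G k.
Proof.
rewrite /dot (bigD1 k) //= /ev eqxx mulr1 big1 ?addr0 // => j /negbTE ->.
by rewrite mulr0.
Qed.

Lemma aux_eta (A : R) : 0 <= A -> A < 1 ->
  [/\ 0 < (1 - A) / 2, 0 < (1 + (A + (1 - A) / 2)) / 2,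
      (1 + (A + (1 - A) / 2)) / 2 < 1 & A + (1 - A) / 2 < (1 + (A + (1 - A) / 2)) / 2].
Proof. move=> h0 h1; split; lra. Qed.

Lemma factor (w : cvec R n) : NX w < 1 -> exists (u : V) (z : cvec R n),
  [/\ NY z < 1, (forall k, w k = Complex (u k) 0 * z k) &
      forall z' : cvec R n, NY z' < 1 -> NX (fun k => Complex (u k) 0 * z' k) < 1].
Proof.
move=> hw.
have r0 := r0 hr.
pose one : V := fun _ => 1.
pose N1 := NX (emb one).
have N10 : 0 <= N1 by exact: N_ge0.
have Nw0 : 0 <= NX w by exact: N_ge0.
pose eps := (1 - NX w) / (2 * (N1 + 1)).
have eps0 : 0 < eps by rewrite divr_gt0 //; lra.
pose x' : V := fun k => cabs (w k) + eps.
have x'eps : forall k, eps <= x' k by move=> k; rewrite /x' lerDr cabs_ge0.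
have hx'nn : nonneg x' by move=> k; exact: le_trans (ltW eps0) (x'eps k).
have hNx' : NX (emb x') < 1.
  have e1 : NX (emb x') <= NX (emb (fun k => cabs (w k))) + NX (emb (fun k => eps * one k)).
    rewrite (_ : emb x' = fun k => emb (fun k => cabs (w k)) k + emb (fun k => eps * one k) k).
      exact: N_add.
    by apply: funext => k; rewrite /emb /x' /one caddE mulr1 addr0.
  have e2 : NX (emb (fun k => cabs (w k))) = NX w.
    by apply: N_eq => // k; rewrite /emb (cabs_nn (cabs_ge0 _)).
  have e3 : NX (emb (fun k => eps * one k)) = eps * N1.
    rewrite -N_scale //; last exact: ltW.
    by apply: N_eq => // k; rewrite /emb /one cabsM mulr1 (cabs_nn ler01) mulr1.
  have e4 : eps * (2 * (N1 + 1)) = 1 - NX w by rewrite /eps; field; lra.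
  rewrite e2 e3 in e1; nra.
pose m := eps `^ r.
have m0 : 0 < m by apply: powR_gt0.
pose a : V := fun k => x' k `^ r.
have am : forall k, m <= a k.
  by move=> k; apply: powR_mono; [exact: ltW|exact: ltW|exact: x'eps].
have ann : nonneg a by move=> k; exact: powR_ge0.
pose phi := Phi NX r.
pose psi := Phi NY r.
have phom : forall l b, 0 <= l -> nonneg b -> phi (fun k => l * b k) = l * phi b.
  by move=> l b l0 hb; apply: Phi_hom.
have psup := Phi_superadd hr hX hXc.
have pmono : forall b b', nonneg b -> (forall k, b k <= b' k) -> phi b <= phi b'.
  by move=> b b' hb hbb; apply: Phi_mono.
have pge0 : forall b, nonneg b -> 0 <= phi b by move=> b _; exact: Phi_ge0.
have [G [hG hGa]] := supergrad phom psup pmono pge0 m0 am.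
pose A := phi a.
have hA : A = NX (emb x') `^ r by exact: Phi_emb.
have A0 : 0 <= A by exact: Phi_ge0.
have A1 : A < 1 by rewrite hA; apply: powR_lt1 => //; exact: N_ge0.
have Gpos : forall k, 0 < G k.
  move=> k; have := hG (@ev R n k) (fun j => ler0n _ _); rewrite dot_ev.
  by apply: lt_le_trans; exact: Phi_ev.
pose beta : V := fun k => G k * a k.
have betapos : forall k, 0 < beta k.
  by move=> k; rewrite mulr_gt0 //; exact: lt_le_trans m0 (am k).
have qhom : forall l b, 0 <= l -> nonneg b -> psi (fun k => l * b k) = l * psi b.
  by move=> l b l0 hb; apply: Phi_hom.
have qsub := Phi_subadd hr hY hYc.
pose Bd : V := fun k => (psi (@ev R n k))^-1.
have Bpos : forall k, 0 < Bd k by move=> k; rewrite invr_gt0; exact: Phi_ev.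
have Bbound : forall t, nonneg t -> psi t <= 1 -> forall k, t k <= Bd k.
  move=> t ht tin k.
  have h1 : psi (fun j => t k * @ev R n k j) <= psi t.
    apply: Phi_mono => //; first by move=> j; rewrite mulr_ge0.
    by move=> j; rewrite /ev; case: eqP => [->|]; rewrite ?mulr1 ?mulr0.
  rewrite qhom in h1; [|exact: ht|by move=> j; exact: ler0n].
  rewrite /Bd -[_^-1]mul1r ler_pdivlMr; last exact: Phi_ev.
  exact: le_trans h1 tin.
pose c0 : V := fun _ => (psi one + 1)^-1.
have psi10 : 0 <= psi one by exact: Phi_ge0.
have c0pos : forall k, 0 < c0 k by move=> k; rewrite invr_gt0; lra.
have c0in : psi c0 <= 1.
  rewrite (_ : c0 = fun k => (psi one + 1)^-1 * one k); last first.
    by apply: funext => k; rewrite /one mulr1.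
  rewrite qhom; first last.
  - by move=> k; exact: ler01.
  - by rewrite invr_ge0; lra.
  rewrite mulrC ler_pdivrMr; lra.
pose eta := (1 - A) / 2.
have [eta0 th0 th1 thA] := aux_eta A0 A1.
have [c [[cpos cin] hc]] := lozan qhom qsub Bpos Bbound c0pos c0in betapos eta0.
have sumbeta : \sum_k beta k = A by rewrite /A -hGa.
pose th := (1 + (A + eta)) / 2.
pose c' : V := fun k => th * c k.
have c'pos : forall k, 0 < c' k by move=> k; rewrite mulr_gt0.
pose d : V := fun k => a k / c' k.
have dpos : forall k, 0 < d k.
  by move=> k; rewrite divr_gt0 //; exact: lt_le_trans m0 (am k).
pose u : V := fun k => d k `^ r^-1.
have upos : forall k, 0 < u k by move=> k; exact: powR_gt0.
have ux : forall k, u k * c' k `^ r^-1 = x' k.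
  move=> k; rewrite /u -powRM ?ltW // /d divfK ?gt_eqF //.
  by rewrite /a (powRK2 r0).
exists u, (fun k => Complex (u k)^-1 0 * w k); split.
- have h1 : NY (fun k => Complex (u k)^-1 0 * w k) <= NY (emb (fun k => c' k `^ r^-1)).
    apply: N_mono => // k.
    have ui : 0 <= (u k)^-1 by rewrite invr_ge0; exact: ltW.
    rewrite cabsM (cabs_nn ui) /emb (cabs_nn (powR_ge0 _ _)).
    have -> : c' k `^ r^-1 = (u k)^-1 * x' k by rewrite -ux mulKf ?gt_eqF.
    by apply: ler_wpM2l => //; rewrite /x' lerDl; exact: ltW.
  have h2 : NY (emb (fun k => c' k `^ r^-1)) < 1.
    apply: (powR_lt1_inv r0); first exact: N_ge0.
    have -> : NY (emb (fun k => c' k `^ r^-1)) `^ r = psi c' by [].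
    rewrite /c' qhom ?ltW //; last by move=> k; exact: ltW.
    by apply: le_lt_trans th1; rewrite -[X in _ <= X]mulr1 ler_wpM2l // ltW.
  exact: le_lt_trans h1 h2.
- move=> k; rewrite mulrA cmulE mulfV ?gt_eqF // !mulr0 !mul0r subr0 addr0.
  by rewrite -[Complex 1 0]/(1 : R[i]) mul1r.
move=> z' hz'.
pose t : V := fun k => cabs (z' k) `^ r.
have tnn : nonneg t by move=> k; exact: powR_ge0.
have tin : psi t <= 1.
  rewrite /psi /t Phi_abs //; apply: ltW; apply: powR_lt1 => //; exact: N_ge0.
have key : NX (fun k => Complex (u k) 0 * z' k) `^ r = phi (fun k => d k * t k).
  rewrite -(Phi_abs hX r0 (fun k => Complex (u k) 0 * z' k)) /phi.
  congr (Phi NX r); apply: funext => k.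
  have u0 : 0 <= u k by exact: ltW.
  rewrite cabsM (cabs_nn u0) (powRM _ u0 (cabs_ge0 _)) /u (powRK1 r0) //.
  exact: ltW.
have h1 : phi (fun k => d k * t k) <= dot G (fun k => d k * t k).
  by apply: hG => k; apply: mulr_ge0; [exact: ltW|exact: tnn].
have h2 : dot G (fun k => d k * t k) = th^-1 * \sum_k beta k * t k / c k.
  rewrite /dot mulr_sumr; apply: eq_bigr => k _.
  rewrite /d /c' /beta; field.
  by apply/andP; split; rewrite gt_eqF.
have h3 := hc t tnn tin.
rewrite sumbeta in h3.
apply: (powR_lt1_inv r0); first exact: N_ge0.
rewrite key; apply: le_lt_trans h1 _; rewrite h2.
rewrite ltr_pdivrMl // mulr1; exact: le_lt_trans h3 thA.
Qed.

End Factor.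


Unset Implicit Arguments.
Set Strict Implicit.
Set Printing Implicit Defensive.
Local Close Scope classical_set_scope.

Lemma monomM (R : realType) n (al : mindex n) (x y : cvec R n) :
  monom al (fun k => x k * y k) = monom al x * monom al y.
Proof. by rewrite /monom -big_split /=; apply: eq_bigr => k _; rewrite exprMn. Qed.

Lemma peval_scale (R : realType) n (s : seq (mindex n)) (f : mindex n -> R[i]) (U z : cvec R n) :
  peval s (fun al => f al * monom al U) z = peval s f (fun k => U k * z k).
Proof. by rewrite /peval; apply: eq_bigr => al _; rewrite monomM mulrA. Qed.

Theorem theorem2p12 (R : realType) (n : nat) (r : R) (hr : 1 < r)
    (NX NY : cvec R n -> R) (hX : lattice_norm NX) (hY : lattice_norm NY)
    (hXc : r_concavity r NX = 1%E) (hYc : r_convexity r NY = 1%E)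
    (J : set (mindex n)) :
  (chi_mon NX J <= chi_mon NY J)%E.
Proof.
have hXc' := conc_ineq hX hXc.
have hYc' := conv_ineq hY hYc.
rewrite /chi_mon; apply: ereal_inf_le_tmp => _ [K [K0 hK] <-].
exists K => //; split => // s c eps us sJ heps.
apply: ge_ereal_sup => _ [w hw <-].
have [u [z [hz hwz hu]]] := factor hr hX hY hXc' hYc' hw.
pose U : cvec R n := fun k => Complex (u k) 0.
pose c' := fun al => c al * monom al U.
have ew : w = (fun k => U k * z k) by apply: funext => k; exact: hwz.
have e1 : peval s (fun al => eps al * c al) w = peval s (fun al => eps al * c' al) z.
  rewrite ew -peval_scale; congr peval; apply: funext => al; by rewrite /c' mulrA.
rewrite e1.
have h1 : ((cabs (peval s (fun al => (eps al * c' al)%R) z))%:E <=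
    sup_norm NY s (fun al => (eps al * c' al)%R))%E by apply: ereal_sup_ubound; exists z.
apply: le_trans h1 _.
apply: le_trans (hK s c' eps us sJ heps) _.
apply: lee_wpmul2l; first by rewrite lee_fin.
apply: ge_ereal_sup => _ [z'' hz'' <-].
rewrite /c' peval_scale.
by apply: ereal_sup_ubound; exists (fun k => U k * z'' k) => //; exact: hu.
Qed.
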